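(* Let $\mathfrak g$ be a complex non-model filiform Lie algebra of dimension $n$, with invariant $z_2=z_2(\mathfrak g)$, and put $z_2^*=n+1-z_2$. Then: (i) for all integers $k,\ell,k',\ell'\ge 1$ with $k\le k'$ and $\ell\le \ell'$ one has $\dim[C^{k'}\mathfrak g,C^{\ell'}\mathfrak g]\le \dim[C^k\mathfrak g,C^\ell\mathfrak g]$; (ii) $[C^{z_2^*}\mathfrak g,C^{z_2^*}\mathfrak g]=\{0\}$; (iii) for every $k\ge 2$, $[C^k\mathfrak g,C^k\mathfrak g]=[C^k\mathfrak g,C^{k+1}\mathfrak g]$; consequently $\mathrm{hp}_{\mathfrak g,k,k}=\mathrm{hp}_{\mathfrak g,k+1,k}=\mathrm{hp}_{\mathfrak g,k,k+1}$ for all $k\ge 2$.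
   Context: All Lie algebras are over $\mathbb C$. The lower central series of a Lie algebra $\mathfrak g$ is $C^1\mathfrak g=\mathfrak g$, $C^k\mathfrak g=[C^{k-1}\mathfrak g,\mathfrak g]$ for $k\ge2$. A Lie algebra $\mathfrak g$ is filiform if $\dim\mathfrak g=n\ge 2$ and $\dim C^k\mathfrak g=n-k$ for $2\le k\le n$. The model filiform Lie algebra of dimension $n$ has a basis $e_1,\dots,e_n$ with $[e_1,e_h]=e_{h-1}$ for $3\le h\le n$ and all other brackets of basis vectors zero; ''non-model'' means not isomorphic to it (so $n\ge5$). An adapted basis of a filiform $\mathfrak g$ is a basis $\{e_1,\dots,e_n\}$ with $[e_1,e_h]=e_{h-1}$ ($3\le h\le n$), $[e_2,e_h]=0$ ($1\le h\le n$), $[e_3,e_h]=0$ ($2\le h\le n$); every filiform Lie algebra has one, and then $C^k\mathfrak g=\langle e_2,\dots,e_{n-k+1}\rangle$ for $2\le k\le n-1$. The invariant $z_2(\mathfrak g)=\max\{k\in\mathbb N: C^{n-k+1}\mathfrak g \text{ is abelian}\}$; equivalently, for any adapted basis, $z_2=\min\{k\ge4:[e_k,e_{k+1}]\ne0\}$. The Hilbert polynomial of $\mathfrak g$ is $\mathrm{HP}_{\mathfrak g}(t,s)=\sum_{k,\ell\ge1}\dim[C^k\mathfrak g,C^\ell\mathfrak g]\,t^ks^\ell\in\mathbb Z[t,s]$, and $\mathrm{hp}_{\mathfrak g,k,\ell}:=\dim[C^k\mathfrak g,C^\ell\mathfrak g]$ denotes the coefficient of $t^ks^\ell$. *)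

(* Defs.v *)
From HB Require Import structures.
From mathcomp Require Import all_boot all_order all_algebra.
From mathcomp Require Import reals.
From mathcomp Require Import complex.
Set Implicit Arguments. Unset Strict Implicit. Unset Printing Implicit Defensive.
Import Order.TTheory GRing.Theory Num.Theory.
Local Open Scope ring_scope.


Section Lie.
Variables (F : fieldType) (V : vectType F) (br : V -> V -> V).

Definition is_lie_bracket : Prop :=
  [/\ forall (a : F) x y z, br (a *: x + y) z = a *: br x z + br y z,
      forall (a : F) x y z, br z (a *: x + y) = a *: br z x + br z y,
      forall x, br x x = 0
    & forall x y z, br x (br y z) + br y (br z x) + br z (br x y) = 0].

(* [U, W] = span of all brackets [u, w], u in U, w in W (by bilinearity,
   the span of the brackets of basis vectors). *)
Definition brsp (U W : {vspace V}) : {vspace V} :=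
  <<[seq br u w | u <- vbasis U, w <- vbasis W]>>%VS.

(* Lower central series: C^1 = g, C^k = [C^(k-1), g]; C^0 := g by convention. *)
Fixpoint lcs (k : nat) : {vspace V} :=
  match k with
  | 0 | 1 => fullv
  | k'.+1 => brsp (lcs k') fullv
  end.

Definition filiform (n : nat) : Prop :=
  [/\ (2 <= n)%N, \dim (fullv : {vspace V}) = n
    & forall k, (2 <= k <= n)%N -> \dim (lcs k) = (n - k)%N].

Definition is_model (n : nat) : Prop :=
  exists e : nat -> V,
    [/\ basis_of (fullv : {vspace V}) [seq e i | i <- iota 1 n]
      & forall i j, (1 <= i <= n)%N -> (1 <= j <= n)%N ->
          br (e i) (e j) =
            if (i == 1%N) && (3 <= j)%N then e j.-1
            else if (j == 1%N) && (3 <= i)%N then - e i.-1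
            else 0].

Definition abelian_sub (U : {vspace V}) : Prop := brsp U U = 0%VS.

Definition is_z2 (n z : nat) : Prop :=
  abelian_sub (lcs (n.+1 - z)) /\
  forall k, abelian_sub (lcs (n.+1 - k)) -> (k <= z)%N.

Definition hp (k l : nat) : nat := \dim (brsp (lcs k) (lcs l)).
End Lie.

(* Main.v *)
Require Import Defs.
From HB Require Import structures.
From mathcomp Require Import all_boot all_order all_algebra.
From mathcomp Require Import reals.
From mathcomp Require Import complex.
From mathcomp Require Import zify.
Set Implicit Arguments. Unset Strict Implicit. Unset Printing Implicit Defensive.
Import Order.TTheory GRing.Theory Num.Theory.
Local Open Scope ring_scope.

Section Aux.
Variables (F : fieldType) (V : vectType F) (br : V -> V -> V).
Hypothesis Hl : is_lie_bracket br.

Lemma br0l z : br 0 z = 0.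
Proof.
case: Hl => H1 _ _ _; have := H1 1 0 0 z.
rewrite !scale1r addr0 => e; apply: (@addrI _ (br 0 z)); by rewrite addr0 -e.
Qed.

Lemma br0r z : br z 0 = 0.
Proof.
case: Hl => _ H1 _ _; have := H1 1 0 0 z.
rewrite !scale1r addr0 => e; apply: (@addrI _ (br z 0)); by rewrite addr0 -e.
Qed.

Lemma brDl x y z : br (x + y) z = br x z + br y z.
Proof. by case: Hl => H1 _ _ _; have := H1 1 x y z; rewrite !scale1r. Qed.

Lemma brDr x y z : br z (x + y) = br z x + br z y.
Proof. by case: Hl => _ H1 _ _; have := H1 1 x y z; rewrite !scale1r. Qed.

Lemma brZl a x z : br (a *: x) z = a *: br x z.
Proof. by case: Hl => H1 _ _ _; have := H1 a x 0 z; rewrite !addr0 br0l addr0. Qed.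

Lemma brZr a x z : br z (a *: x) = a *: br z x.
Proof. by case: Hl => _ H1 _ _; have := H1 a x 0 z; rewrite !addr0 br0r addr0. Qed.

Lemma brxx x : br x x = 0.
Proof. by case: Hl. Qed.

Lemma brN x y : br x y = - br y x.
Proof.
have := brxx (x + y); rewrite brDl !brDr !brxx add0r addr0.
by move/eqP; rewrite addr_eq0 => /eqP.
Qed.

Lemma memv_brsp (U W : {vspace V}) u w : u \in U -> w \in W -> br u w \in brsp br U W.
Proof.
move=> uU wW; rewrite (coord_vbasis uU) (coord_vbasis wW).
have hs : forall m (f : 'I_m -> V) z, br (\sum_(i < m) f i) z = \sum_(i < m) br (f i) z.
  move=> m f z; elim: m f => [|m IH] f; first by rewrite !big_ord0 br0l.
  by rewrite !big_ord_recr /= brDl IH.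
have hs' : forall m (f : 'I_m -> V) z, br z (\sum_(i < m) f i) = \sum_(i < m) br z (f i).
  move=> m f z; elim: m f => [|m IH] f; first by rewrite !big_ord0 br0r.
  by rewrite !big_ord_recr /= brDr IH.
rewrite hs; apply: rpred_sum => i _; rewrite brZl; apply: rpredZ.
rewrite hs'; apply: rpred_sum => j _; rewrite brZr; apply: rpredZ.
apply: memv_span; apply: allpairs_f; apply: mem_nth.
  by rewrite size_tuple.
by rewrite size_tuple.
Qed.

Lemma brspP (U W X : {vspace V}) :
  (forall u w, u \in U -> w \in W -> br u w \in X) -> (brsp br U W <= X)%VS.
Proof.
move=> H; apply/span_subvP => z /allpairsP [[u w] [/= uU wW ->]].
by apply: H; apply: vbasis_mem.
Qed.

Lemma brsp_le (U1 U2 W1 W2 : {vspace V}) : (U1 <= U2)%VS -> (W1 <= W2)%VS ->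
  (brsp br U1 W1 <= brsp br U2 W2)%VS.
Proof.
move=> /subvP h1 /subvP h2; apply: brspP => u w uU wW.
by apply: memv_brsp; [apply: h1|apply: h2].
Qed.

Lemma brspC (U W : {vspace V}) : brsp br U W = brsp br W U.
Proof.
by apply/eqP; rewrite eqEsubv; apply/andP; split; apply: brspP => u w uU wW;
  rewrite brN rpredN; apply: memv_brsp.
Qed.

Lemma lcsS k : (lcs br k.+1 <= lcs br k)%VS.
Proof.
elim: k => [|k IH]; first by [].
case: k IH => [|k] IH; first exact: subvf.
by apply: brsp_le.
Qed.

Lemma lcs_le k k' : (k <= k')%N -> (lcs br k' <= lcs br k)%VS.
Proof.
move=> /subnK <-; elim: (k' - k)%N => [|m IH]; first exact: subvv.
by rewrite addSn; apply: subv_trans (lcsS _) IH.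
Qed.

Lemma brsp_line (A B : {vspace V}) x : (B <= A)%VS -> x \in A -> (A <= B + <[x]>)%VS ->
  brsp br A A = brsp br A B.
Proof.
move=> BA xA /subvP AB; apply/eqP; rewrite eqEsubv; apply/andP; split;
  last by apply: brsp_le.
apply: brspP => u w uA wA.
have [w' w'B [w2 /vlineP [b ->] ->]] := memv_addP (AB _ wA).
rewrite brDr brZr; apply: rpredD; first exact: memv_brsp.
apply: rpredZ.
have [u' u'B [u2 /vlineP [a ->] ->]] := memv_addP (AB _ uA).
rewrite brDl brZl brxx scaler0 addr0 brN rpredN; exact: memv_brsp.
Qed.

Lemma brsp0 (A W : {vspace V}) : A = 0%VS -> brsp br A W = 0%VS.
Proof.
move=> ->; apply/eqP; rewrite -subv0; apply: brspP => u w.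
by rewrite memv0 => /eqP -> _; rewrite br0l mem0v.
Qed.

End Aux.

Theorem mainTheorem1 (R : realType) (V : vectType R[i]) (br : V -> V -> V)
  (n z2 : nat) :
  is_lie_bracket br -> filiform br n -> ~ is_model br n -> is_z2 br n z2 ->
  let z2s := (n.+1 - z2)%N in
  [/\ (forall k l k' l' : nat, (1 <= k)%N -> (1 <= l)%N -> (k <= k')%N -> (l <= l')%N ->
         (hp br k' l' <= hp br k l)%N),
      brsp br (lcs br z2s) (lcs br z2s) = 0%VS
    & forall k : nat, (2 <= k)%N ->
        brsp br (lcs br k) (lcs br k) = brsp br (lcs br k) (lcs br k.+1) /\
        hp br k k = hp br k.+1 k /\ hp br k k = hp br k k.+1].
Proof.
move=> Hl [n2 dimn Hdim] _ [Hz _] z2s; split.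
- move=> k l kq lq _ _ kk ll; apply: dimvS; apply: (brsp_le Hl);
  exact: (lcs_le Hl).
- exact: Hz.
move=> k k2.
suff E : brsp br (lcs br k) (lcs br k) = brsp br (lcs br k) (lcs br k.+1).
  by split=> //; rewrite /hp E // (brspC Hl (lcs br k.+1)).
case: (ltnP k n) => kn.
  have dk : \dim (lcs br k) = (n - k)%N by apply: Hdim; rewrite k2 ltnW.
  have dk1 : \dim (lcs br k.+1) = (n - k.+1)%N by apply: Hdim; rewrite kn andbT ltnW.
  set A := lcs br k; set B := lcs br k.+1.
  have BA : (B <= A)%VS by exact: (lcsS Hl k).
  have [/allP hall | /allPn [x xb xB]] := boolP (all (fun x => x \in B) (vbasis A)).
    have : (A <= B)%VS.
      by rewrite -(span_basis (vbasisP A)); apply/span_subvP => x /hall.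
    by move/dimvS; rewrite dk dk1 subnS leqNgt ltn_predL subn_gt0 kn.
  have xA := vbasis_mem xb.
  apply: (brsp_line Hl BA xA).
  have h1 : (B + <[x]> <= A)%VS by rewrite subv_add BA andTb -memvE.
  have h2 : (\dim B < \dim (B + <[x]>))%N.
    rewrite (ltn_leqif (dimv_leqif_eq (addvSl B <[x]>))); apply/eqP => e.
    by case/negP: xB; rewrite e; exact: (subvP (addvSr _ _)) _ (memv_line x).
  have : (B + <[x]> == A)%VS.
    rewrite eqEdim h1 /= dk; rewrite dk1 subnS in h2.
    by rewrite -(prednK (_ : 0 < n - k)%N) // subn_gt0.
  by move/eqP ->.
have z0 : lcs br k = 0%VS.
  apply/eqP; rewrite -subv0; apply: subv_trans (lcs_le Hl kn) _.
  by rewrite subv0 -dimv_eq0 Hdim ?subnn // n2 leqnn.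
by rewrite !(brsp0 Hl) // ; apply/eqP; rewrite -subv0 -z0; exact: (lcsS Hl).
Qed.
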